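(* Let $X=\{x\in\{0,1\}^n: Ax\le b\}$ for a real matrix $A$ and vector $b$, and assume the standing assumptions. Suppose $\lambda_i(\pi)\neq0$ for some $i\in I$. Define the target inequality $\tilde\pi^\top x\le\tilde\pi_0$ by $\tilde\pi=e_i,\ \tilde\pi_0=0$ (i.e. $x_i\le 0$) if $i\in S^+(\pi)$, and $\tilde\pi=-e_i,\ \tilde\pi_0=-1$ (i.e. $x_i\ge 1$) if $i\in S^-(\pi)$. Let $$\gamma^*=\min\Big\{\pi_0x_0-\pi^\top x:\ (x,x_0)\in\mathbb{R}^n\times\mathbb{R}_{\ge0},\ Ax-bx_0\le0,\ 0\le x_j\le x_0\ \forall j,\ \big(x_j\le 0 \text{ or } x_j\ge x_0\big)\ \forall j\in I,\ \tilde\pi_0x_0-\tilde\pi^\top x=-1\Big\}.$$ Then $\gamma^*=|\lambda_i(\pi)|$.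
   Context: Let $n\ge1$, $I=\{1,\dots,n\}$, $e_i$ the $i$-th unit vector. Standing assumptions: (a) $\pi^\top x\le\pi_0$ is valid for $X$ and $\pi_0=\max_{x\in X}\pi^\top x$; (b) for every $i\in I$ there exist $x,x'\in X$ with $x_i=0$, $x'_i=1$. $\lambda_i(\pi):=\max_{x\in X}\{\pi^\top x:x_i=0\}-\max_{x\in X}\{\pi^\top x:x_i=1\}$; $S^-(\pi)=\{i:\lambda_i(\pi)<0\}$, $S^+(\pi)=\{i:\lambda_i(\pi)>0\}$. *)

(* Defs.v *)
(* the statement is purely order-algebraic, stated over an
   arbitrary real field R (covers the real numbers). *)
From HB Require Import structures.
From mathcomp Require Import all_boot all_order all_algebra.
Set Implicit Arguments. Unset Strict Implicit. Unset Printing Implicit Defensive.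
Import Order.TTheory GRing.Theory Num.Theory.
Local Open Scope ring_scope.

Section Defs.
Variable R : realFieldType.

Definition dotv (n : nat) (p x : 'cV[R]_n) : R := \sum_(j < n) p j 0 * x j 0.

Definition unitv (n : nat) (i : 'I_n) : 'cV[R]_n :=
  \col_(j < n) (if j == i then 1 else 0).

Definition inX (m n : nat) (A : 'M[R]_(m, n)) (b : 'cV[R]_m) (x : 'cV[R]_n) : Prop :=
  (forall j : 'I_n, x j 0 = 0 \/ x j 0 = 1) /\
  (forall k : 'I_m, (A *m x) k 0 <= b k 0).

Definition is_max_on (n : nat) (P : 'cV[R]_n -> Prop) (p : 'cV[R]_n) (v : R) : Prop :=
  (exists2 x, P x & dotv p x = v) /\ (forall x, P x -> dotv p x <= v).

Definition is_lambda (m n : nat) (A : 'M[R]_(m, n)) (b : 'cV[R]_m)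
    (p : 'cV[R]_n) (i : 'I_n) (lam : R) : Prop :=
  exists M0 M1,
    [/\ is_max_on (fun x => inX A b x /\ x i 0 = 0) p M0,
        is_max_on (fun x => inX A b x /\ x i 0 = 1) p M1 &
        lam = M0 - M1].

Definition pit (n : nat) (i : 'I_n) (lam : R) : 'cV[R]_n :=
  if 0 < lam then unitv i else - unitv i.
Definition pit0 (lam : R) : R := if 0 < lam then 0 else -1.

Definition feasible (m n : nat) (A : 'M[R]_(m, n)) (b : 'cV[R]_m)
    (i : 'I_n) (lam : R) (x : 'cV[R]_n) (x0 : R) : Prop :=
  [/\ 0 <= x0,
      (forall k : 'I_m, (A *m x) k 0 - b k 0 * x0 <= 0),
      (forall j : 'I_n, 0 <= x j 0 /\ x j 0 <= x0),
      (forall j : 'I_n, x j 0 <= 0 \/ x0 <= x j 0) &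
      pit0 lam * x0 - dotv (pit i lam) x = -1].

Definition objective (n : nat) (p : 'cV[R]_n) (p0 : R) (x : 'cV[R]_n) (x0 : R) : R :=
  p0 * x0 - dotv p x.

Definition is_gamma_star (m n : nat) (A : 'M[R]_(m, n)) (b : 'cV[R]_m)
    (p : 'cV[R]_n) (p0 : R) (i : 'I_n) (lam : R) (g : R) : Prop :=
  (exists x x0, feasible A b i lam x x0 /\ objective p p0 x x0 = g) /\
  (forall x x0, feasible A b i lam x x0 -> g <= objective p p0 x x0).

End Defs.

(* Main.v *)
Require Import Defs.
From HB Require Import structures.
From mathcomp Require Import all_boot all_order all_algebra.
From mathcomp Require Import lra.
Import Order.TTheory GRing.Theory Num.Theory.
Local Open Scope ring_scope.

Lemma dot_unit (R : realFieldType) n (i : 'I_n) (x : 'cV[R]_n) :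
  dotv (@unitv R n i) x = x i 0.
Proof.
rewrite /dotv (bigD1 i) //= big1 ?addr0; first by rewrite !mxE eqxx mul1r.
by move=> j /negbTE ji; rewrite !mxE ji mul0r.
Qed.

Lemma dot_neg (R : realFieldType) n (p x : 'cV[R]_n) :
  dotv (- p) x = - dotv p x.
Proof.
rewrite /dotv -sumrN; apply: eq_bigr => j _; by rewrite !mxE mulNr.
Qed.

Lemma feas_char (R : realFieldType) m n (A : 'M[R]_(m, n)) b i lam x x0 :
  feasible A b i lam x x0 ->
  [/\ x0 = 1, inX A b x & x i 0 = (if 0 < lam then 1 else 0)].
Proof.
case=> h0 hA hb hd hp.
have hx0 : x0 = 1.
  move: hp; rewrite /pit0 /pit; case: ifP => _.
    rewrite dot_unit mul0r sub0r => /eqP; rewrite eqr_opp => /eqP hi.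
    have [h1 h2] := hb i; case: (hd i) => h3; lra.
  rewrite dot_neg dot_unit => hi.
  have [h1 h2] := hb i; case: (hd i) => h3; lra.
subst x0; split => //.
  split.
    move=> j; have [h1 h2] := hb j; case: (hd j) => h3; [left|right]; lra.
  by move=> k; have := hA k; rewrite mulr1; lra.
move: hp; rewrite /pit0 /pit; case: ifP => _.
  rewrite dot_unit; lra.
rewrite dot_neg dot_unit; lra.
Qed.

Theorem proposition1 (R : realFieldType) (m n : nat)
    (A : 'M[R]_(m, n)) (b : 'cV[R]_m) (p : 'cV[R]_n) (p0 : R)
    (* (a) pi^T x <= pi0 valid for X, and pi0 = max over X *)
    (Hvalid : forall x, inX A b x -> dotv p x <= p0)
    (Htight : exists2 x, inX A b x & dotv p x = p0)
    (* (b) every coordinate takes both values 0 and 1 in X *)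
    (Hboth : forall j : 'I_n,
        (exists2 x, inX A b x & x j 0 = 0) /\ (exists2 x, inX A b x & x j 0 = 1))
    (i : 'I_n) (lam : R)
    (Hlam : is_lambda A b p i lam) (Hnz : lam != 0) :
  is_gamma_star A b p p0 i lam `|lam|.
Proof.
case: Hlam => M0 [M1 [[[x0m [hx0 hx0i] hM0] hM0u] [[x1m [hx1 hx1i] hM1] hM1u] hl]].
have le0 : M0 <= p0 by rewrite -hM0; apply: Hvalid.
have le1 : M1 <= p0 by rewrite -hM1; apply: Hvalid.
case: Htight => xt hxt hpt.
have hge : p0 <= M0 \/ p0 <= M1.
  case: (hxt.1 i) => h; [left; rewrite -hpt; exact: hM0u|right; rewrite -hpt; exact: hM1u].
have feas_of : forall x, inX A b x -> x i 0 = (if 0 < lam then 1 else 0) ->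
    feasible A b i lam x 1.
  move=> x [hbin hAx] hxi; split.
  - by [].
  - by move=> k; rewrite mulr1; have := hAx k; lra.
  - move=> j; case: (hbin j) => ->; lra.
  - move=> j; case: (hbin j) => ->; [left|right]; lra.
  - rewrite /pit0 /pit; case: ifP => hl0; move: hxi; rewrite hl0 => hxi.
      by rewrite dot_unit hxi mul0r sub0r.
    rewrite dot_neg dot_unit hxi opprK addr0; lra.
have [lpos|lneg] := ltrP 0 lam.
  have hp0 : p0 = M0 by case: hge; lra.
  rewrite gtr0_norm //; split.
    exists x1m, 1; split; first by apply: feas_of => //; rewrite lpos.
    by rewrite /objective mulr1 hM1 hp0 hl.
  move=> x x1 /feas_char [-> hx]; rewrite lpos => hxi.
  rewrite /objective mulr1 hl -hp0; have := hM1u x (conj hx hxi); lra.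
have lneg' : lam < 0 by rewrite lt_neqAle Hnz lneg.
have hp0 : p0 = M1 by case: hge; lra.
have nl : ~~ (0 < lam) by rewrite -leNgt.
rewrite ltr0_norm //; split.
  exists x0m, 1; split; first by apply: feas_of => //; rewrite (negbTE nl).
  by rewrite /objective mulr1 hM0 hp0 hl opprB.
move=> x x1 /feas_char [-> hx]; rewrite (negbTE nl) => hxi.
rewrite /objective mulr1 hl -hp0; have := hM0u x (conj hx hxi); lra.
Qed.
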